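(* Let $n$ be odd and let $L=\bigoplus_{i\in\mathbb{Z}/n\mathbb{Z}}L_i$ be a $(\mathbb{Z}/n\mathbb{Z})$-graded Lie algebra over a field with $L_0=0$ that satisfies the selective metabelian condition. Let $a,b,c\in\mathbb{Z}/n\mathbb{Z}$ with the additive order of $a$ greater than $3$. Then $$\big[x_c,\,y_1,\,y_2,\,\dots,\,y_7\big]=0$$ for every $x_c\in L_c$ and all elements $y_1,\dots,y_7$ (not necessarily equal) each of the form $y_k=[v_k,w_k]$ with $v_k\in L_b$, $w_k\in L_{a-b}$.
   Context: A $(\mathbb{Z}/n\mathbb{Z})$-graded Lie algebra is $L=\bigoplus_{i=0}^{n-1}L_i$ with $[L_i,L_j]\subseteq L_{i+j \bmod n}$. Products $[y_1,\dots,y_s]$ are left-normed: $[\dots[[y_1,y_2],y_3],\dots,y_s]$. A sequence $(a_1,\dots,a_k)$ in $\mathbb{Z}/n\mathbb{Z}$ is $(-1)$-dependent if $t_1a_1+\dots+t_ka_k=0$ for some $t_i\in\{0,1\}$ not all zero, and $(-1)$-independent otherwise. $L$ satisfies the selective metabelian condition if $\big[[x_{d_1},x_{d_2}],[x_{d_3},x_{d_4}]\big]=0$ for all $x_{d_i}\in L_{d_i}$ whenever $(d_1,d_2,d_3,d_4)$ is $(-1)$-independent. *)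

(* Defs.v *)
From HB Require Import structures.
From mathcomp Require Import all_boot all_order all_algebra all_fingroup.
Set Implicit Arguments. Unset Strict Implicit. Unset Printing Implicit Defensive.
Import GRing.Theory.
Local Open Scope ring_scope.

Definition lie_bracket (K : fieldType) (L : lmodType K) (br : L -> L -> L) :=
  [/\ (forall z, linear (br^~ z)),
      (forall z, linear (br z)),
      (forall x, br x x = 0) &
      (forall x y z, br (br x y) z + br (br y z) x + br (br z x) y = 0)].

(* Additive order of an element of Z/nZ (n = m.+1), i.e. the order of a in
   the additive group 'I_m.+1 (whose canonical finGroupType law is +). *)
Definition add_order (m : nat) (a : 'I_m.+1) : nat := #[a]%g.

Definition graded (K : fieldType) (L : lmodType K) (br : L -> L -> L)
  (m : nat) (Lg : 'I_m.+1 -> {pred L}) :=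
  [/\ (forall i, 0 \in Lg i),
      (forall i k x y, x \in Lg i -> y \in Lg i -> k *: x + y \in Lg i),
      (forall x : L, exists xs : 'I_m.+1 -> L,
          (forall i, xs i \in Lg i) /\ x = \sum_i xs i),
      (forall xs : 'I_m.+1 -> L, (forall i, xs i \in Lg i) ->
          \sum_i xs i = 0 -> forall i, xs i = 0) &
      (forall i j x y, x \in Lg i -> y \in Lg j -> br x y \in Lg (i + j))].

(* (-1)-dependence of a finite sequence in Z/nZ: some nonempty
   subfamily (selected by t_i in {0,1}, not all zero) sums to 0. *)
Definition minus1_dep (m : nat) (s : seq 'I_m.+1) : Prop :=
  exists t : bitseq, [/\ size t = size s, has id t & \sum_(x <- mask t s) x = 0].

Definition selective_metabelian (K : fieldType) (L : lmodType K)
  (br : L -> L -> L) (m : nat) (Lg : 'I_m.+1 -> {pred L}) :=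
  forall d1 d2 d3 d4 : 'I_m.+1, ~ minus1_dep [:: d1; d2; d3; d4] ->
  forall x1 x2 x3 x4, x1 \in Lg d1 -> x2 \in Lg d2 -> x3 \in Lg d3 ->
    x4 \in Lg d4 -> br (br x1 x2) (br x3 x4) = 0.

Definition lnprod (T : Type) (br : T -> T -> T) (x : T) (ys : seq T) :=
  foldl br x ys.

(* Main.v *)
Require Import Defs.
From HB Require Import structures.
From mathcomp Require Import all_boot all_order all_algebra all_fingroup all_solvable.
From mathcomp Require Import ring zify.
Set Implicit Arguments. Unset Strict Implicit. Unset Printing Implicit Defensive.
Import GRing.Theory.
Local Open Scope ring_scope.


Lemma ord_facts (m : nat) (a : 'I_m.+1) : odd m.+1 -> (3 < add_order a)%N ->
  [/\ a != 0, a *+ 2 != 0, a *+ 3 != 0 & a *+ 4 != 0].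
Proof.
move=> oddN ho.
have key : forall k, (0 < k)%N -> (k <= 4)%N -> a *+ k != 0.
  move=> k k0 k4; apply/negP => /eqP ak.
  have : (#[a]%g %| k)%N.
    rewrite order_dvdn; apply/eqP; rewrite Zp_expg -Zp_mulrn ak //.
  move=> dk.
  have dN : (#[a]%g %| m.+1)%N.
    have := order_dvdG (in_setT a); by rewrite cardsT card_ord.
  have oa := dvdn_odd dN oddN.
  move: ho; rewrite /add_order => ho.
  have := dvdn_leq k0 dk.
  case: k k0 k4 dk {ak} => [|[|[|[|[|k]]]]] //= _ _ dk; try lia.
by split; [exact: (key 1%N) | exact: (key 2%N) | exact: (key 3%N) | exact: (key 4%N)].
Qed.



Lemma brDl (K : fieldType) (L : lmodType K) (br : L -> L -> L) :
  lie_bracket br -> forall u v z, br (u + v) z = br u z + br v z.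
Proof. by case=> hl _ _ _ u v z; have := hl z 1 u v; rewrite !scale1r. Qed.
Lemma brDr (K : fieldType) (L : lmodType K) (br : L -> L -> L) :
  lie_bracket br -> forall z u v, br z (u + v) = br z u + br z v.
Proof. by case=> _ hr _ _ z u v; have := hr z 1 u v; rewrite !scale1r. Qed.
Lemma br0l (K : fieldType) (L : lmodType K) (br : L -> L -> L) :
  lie_bracket br -> forall z, br 0 z = 0.
Proof.
move=> hl z; have := brDl hl 0 0 z; rewrite addr0 => H.
by apply: (@addrI _ (br 0 z)); rewrite addr0 -H.
Qed.
Lemma br0r (K : fieldType) (L : lmodType K) (br : L -> L -> L) :
  lie_bracket br -> forall z, br z 0 = 0.
Proof.
move=> hl z; have := brDr hl z 0 0; rewrite addr0 => H.
by apply: (@addrI _ (br z 0)); rewrite addr0 -H.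
Qed.
Lemma brNl (K : fieldType) (L : lmodType K) (br : L -> L -> L) :
  lie_bracket br -> forall u z, br (- u) z = - br u z.
Proof.
move=> hl u z; apply/eqP; rewrite -subr_eq0 opprK -(brDl hl) // addNr (br0l hl) //.
Qed.
Lemma brNr (K : fieldType) (L : lmodType K) (br : L -> L -> L) :
  lie_bracket br -> forall z u, br z (- u) = - br z u.
Proof.
move=> hl z u; apply/eqP; rewrite -subr_eq0 opprK -(brDr hl) // addNr (br0r hl) //.
Qed.
Lemma brBl (K : fieldType) (L : lmodType K) (br : L -> L -> L) :
  lie_bracket br -> forall u v z, br (u - v) z = br u z - br v z.
Proof. by move=> hl u v z; rewrite (brDl hl) // (brNl hl). Qed.
Lemma br_anti (K : fieldType) (L : lmodType K) (br : L -> L -> L) :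
  lie_bracket br -> forall u v, br u v = - br v u.
Proof.
move=> hl u v; have := hl; case=> _ _ ha _.
have := ha (u + v); rewrite !(brDl hl) // !(brDr hl) // !ha add0r addr0 => /eqP.
by rewrite addr_eq0 => /eqP.
Qed.
Lemma jac1 (K : fieldType) (L : lmodType K) (br : L -> L -> L) :
  lie_bracket br -> forall u v w, br u (br v w) = br (br u v) w - br (br u w) v.
Proof.
move=> hl u v w; have := hl; case=> _ _ _ hj.
have := hj u v w; rewrite (br_anti hl (br v w) u) (br_anti hl w u) (brNl hl) //.
move/eqP; rewrite addrAC subr_eq0 => /eqP <-.
done.
Qed.
Lemma jac2 (K : fieldType) (L : lmodType K) (br : L -> L -> L) :
  lie_bracket br -> forall P v Y, br (br P v) Y = br (br P Y) v + br P (br v Y).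
Proof.
move=> hl P v Y; have := hl; case=> _ _ _ hj.
have := hj P v Y; rewrite (br_anti hl (br v Y) P) (br_anti hl Y P) (brNl hl) //.
move/eqP; rewrite -addrA addr_eq0 => /eqP ->.
by rewrite opprD !opprK addrC.
Qed.

Lemma bpuzzle (p0 p1 p2 p3 p4 p5 q0 q1 q2 q3 q4 q5 : bool) :
  [&& ~~ (p0 && p1),
     ~~ (p0 && p2),
     ~~ (p0 && p3),
     ~~ (p0 && p4),
     ~~ (p1 && p2),
     ~~ (p1 && p3),
     ~~ (p1 && p4),
     ~~ (p1 && p5),
     ~~ (p2 && p3),
     ~~ (p2 && p4),
     ~~ (p2 && p5),
     ~~ (p3 && p4),
     ~~ (p3 && p5),
     ~~ (p4 && p5),
     ~~ (q0 && q1),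
     ~~ (q0 && q2),
     ~~ (q0 && q3),
     ~~ (q0 && q4),
     ~~ (q1 && q2),
     ~~ (q1 && q3),
     ~~ (q1 && q4),
     ~~ (q1 && q5),
     ~~ (q2 && q3),
     ~~ (q2 && q4),
     ~~ (q2 && q5),
     ~~ (q3 && q4),
     ~~ (q3 && q5) &
     ~~ (q4 && q5)] ==> [|| ~~ [|| p0, p1, q0 | q1], ~~ [|| p1, p2, q1 | q2], ~~ [|| p2, p3, q2 | q3], ~~ [|| p3, p4, q3 | q4] | ~~ [|| p4, p5, q4 | q5]].
Proof.
by case: p0; case: p1; case: p2; case: p3; case: p4; case: p5; case: q0; case: q1; case: q2; case: q3; case: q4; case: q5.
Qed.

Lemma bpuzzle' (p0 p1 p2 p3 p4 p5 q0 q1 q2 q3 q4 q5 : bool) :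
  ~~ (p0 && p1) ->
  ~~ (p0 && p2) ->
  ~~ (p0 && p3) ->
  ~~ (p0 && p4) ->
  ~~ (p1 && p2) ->
  ~~ (p1 && p3) ->
  ~~ (p1 && p4) ->
  ~~ (p1 && p5) ->
  ~~ (p2 && p3) ->
  ~~ (p2 && p4) ->
  ~~ (p2 && p5) ->
  ~~ (p3 && p4) ->
  ~~ (p3 && p5) ->
  ~~ (p4 && p5) ->
  ~~ (q0 && q1) ->
  ~~ (q0 && q2) ->
  ~~ (q0 && q3) ->
  ~~ (q0 && q4) ->
  ~~ (q1 && q2) ->
  ~~ (q1 && q3) ->
  ~~ (q1 && q4) ->
  ~~ (q1 && q5) ->
  ~~ (q2 && q3) ->
  ~~ (q2 && q4) ->
  ~~ (q2 && q5) ->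
  ~~ (q3 && q4) ->
  ~~ (q3 && q5) ->
  ~~ (q4 && q5) ->
  [|| ~~ [|| p0, p1, q0 | q1], ~~ [|| p1, p2, q1 | q2], ~~ [|| p2, p3, q2 | q3], ~~ [|| p3, p4, q3 | q4] | ~~ [|| p4, p5, q4 | q5]].
Proof.
move=> h0 h1 h2 h3 h4 h5 h6 h7 h8 h9 h10 h11 h12 h13 h14 h15 h16 h17 h18 h19 h20 h21 h22 h23 h24 h25 h26 h27.
apply: (implyP (bpuzzle p0 p1 p2 p3 p4 p5 q0 q1 q2 q3 q4 q5)).
by rewrite h0 h1 h2 h3 h4 h5 h6 h7 h8 h9 h10 h11 h12 h13 h14 h15 h16 h17 h18 h19 h20 h21 h22 h23 h24 h25 h26 h27.
Qed.

Lemma puzzle (N : nat) (a p q : 'I_N.+1) : a != 0 -> a *+ 2 != 0 -> a *+ 3 != 0 -> a *+ 4 != 0 ->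
  exists2 j, (j <= 4)%N & [&& p + a *+ j != 0, p + a *+ j.+1 != 0, q + a *+ j != 0 & q + a *+ j.+1 != 0].
Proof.
move=> a1 a2 a3 a4.
have pc : forall (r : 'I_N.+1) i k, (0 < k <= 4)%N -> ~~ ((r + a *+ i == 0) && (r + a *+ (i + k) == 0)).
  move=> r i k hk; apply/negP => /andP [/eqP h1 /eqP h2].
  have : a *+ k = 0 by move: h2; rewrite mulrnDr addrA h1 add0r.
  clear h2; apply/eqP; case: k hk => [|[|[|[|[|k]]]]] //.
have := bpuzzle' (pc p 0 1 isT) (pc p 0 2 isT) (pc p 0 3 isT) (pc p 0 4 isT) (pc p 1 1 isT) (pc p 1 2 isT) (pc p 1 3 isT) (pc p 1 4 isT) (pc p 2 1 isT) (pc p 2 2 isT) (pc p 2 3 isT) (pc p 3 1 isT) (pc p 3 2 isT) (pc p 4 1 isT) (pc q 0 1 isT) (pc q 0 2 isT) (pc q 0 3 isT) (pc q 0 4 isT) (pc q 1 1 isT) (pc q 1 2 isT) (pc q 1 3 isT) (pc q 1 4 isT) (pc q 2 1 isT) (pc q 2 2 isT) (pc q 2 3 isT) (pc q 3 1 isT) (pc q 3 2 isT) (pc q 4 1 isT).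
move=> /orP [h|/orP [h|/orP [h|/orP [h|h]]]].
- by exists 0%N => //; move: h; rewrite !negb_or.
- by exists 1%N => //; move: h; rewrite !negb_or.
- by exists 2%N => //; move: h; rewrite !negb_or.
- by exists 3%N => //; move: h; rewrite !negb_or.
- by exists 4%N => //; move: h; rewrite !negb_or.
Qed.


Lemma indep4 (N : nat) (d1 d2 d3 d4 : 'I_N.+1) :
  d1 != 0 -> d2 != 0 -> d3 != 0 -> d4 != 0 ->
  d1 + d2 != 0 -> d1 + d3 != 0 -> d1 + d4 != 0 -> d2 + d3 != 0 ->
  d2 + d4 != 0 -> d3 + d4 != 0 -> d1 + (d2 + d3) != 0 ->
  d1 + (d2 + d4) != 0 -> d1 + (d3 + d4) != 0 -> d2 + (d3 + d4) != 0 ->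
  d1 + (d2 + (d3 + d4)) != 0 -> ~ minus1_dep [:: d1; d2; d3; d4].
Proof.
move=> *; case=> t [st ht hs].
case: t st ht hs => [|t1 [|t2 [|t3 [|t4 [|]]]]] //= _.
case: t1; case: t2; case: t3; case: t4 => //= _;
  rewrite !big_cons big_nil ?addr0 => /eqP; apply/negP; assumption.
Qed.

Lemma mem0 (K : fieldType) (L : lmodType K) (br : L -> L -> L) m (Lg : 'I_m.+1 -> {pred L}) :
  graded br Lg -> forall i, 0 \in Lg i.
Proof. by case. Qed.
Lemma memN (K : fieldType) (L : lmodType K) (br : L -> L -> L) m (Lg : 'I_m.+1 -> {pred L}) :
  graded br Lg -> forall i x, x \in Lg i -> - x \in Lg i.
Proof.
move=> hg i x hx; have := hg; case=> h0 hc _ _ _.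
by have := hc i (-1) x 0 hx (h0 i); rewrite addr0 scaleN1r.
Qed.
Lemma mem_br (K : fieldType) (L : lmodType K) (br : L -> L -> L) m (Lg : 'I_m.+1 -> {pred L}) :
  graded br Lg -> forall i j x y, x \in Lg i -> y \in Lg j -> br x y \in Lg (i + j).
Proof. by case. Qed.

Lemma eq_neq0 (V : zmodType) (F E : V) : F != 0 -> E = F -> E != 0.
Proof. by move=> h ->. Qed.
Lemma eqN_neq0 (V : zmodType) (F E : V) : F != 0 -> E = - F -> E != 0.
Proof. by move=> h ->; rewrite oppr_eq0. Qed.

Ltac zs := match goal with
 | H : is_true (~~ (?F == _)) |- is_true (~~ (?E == _)) =>
   first [ exact H | apply: (eq_neq0 H); ring | apply: (eqN_neq0 H); ring ]
end.

Lemma hardL (K : fieldType) (L : lmodType K) (br : L -> L -> L) m (Lg : 'I_m.+2 -> {pred L}) :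
  lie_bracket br -> graded br Lg -> (forall x, x \in Lg 0 -> x = 0) ->
  selective_metabelian br Lg ->
  forall (a D : 'I_m.+2), a != 0 -> a *+ 2 != 0 -> a *+ 3 != 0 -> a *+ 4 != 0 ->
  D - a *+ 2 != 0 -> D - a != 0 -> D != 0 -> D + a != 0 -> D + a *+ 2 != 0 ->
  D + a *+ 3 != 0 -> D + a *+ 4 != 0 ->
  forall u v1 w1 v2 w2, u \in Lg D -> v1 \in Lg (- a) -> v2 \in Lg (- a) ->
  w1 \in Lg (a *+ 2) -> w2 \in Lg (a *+ 2) ->
  br (br u (br v1 w1)) (br v2 w2) = 0.
Proof.
move=> hl hg h0 sm a D a1 a2 a3 a4 e1 e2 e3 e4 e5 e6 e7 u v1 w1 v2 w2 hu hv1 hv2 hw1 hw2.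
rewrite (jac1 hl u v1 w1) (brBl hl).
have -> : br (br (br u v1) w1) (br v2 w2) = 0.
  apply: (sm (D + - a) (a *+ 2) (- a) (a *+ 2)) => //; last by apply: mem_br.
  by apply: indep4; zs.
rewrite (jac2 hl (br u w1)).
have -> : br v1 (br v2 w2) = 0.
  apply: h0; have := mem_br hg hv1 (mem_br hg hv2 hw2).
  by rewrite (_ : - a + (- a + a *+ 2) = 0) //; ring.
have -> : br (br u w1) (br v2 w2) = 0.
  apply: (sm D (a *+ 2) (- a) (a *+ 2)) => //.
  by apply: indep4; zs.
by rewrite (br0l hl) (br0r hl) !addr0 subr0.
Qed.
Lemma genL (K : fieldType) (L : lmodType K) (br : L -> L -> L) m (Lg : 'I_m.+2 -> {pred L}) :
  selective_metabelian br Lg ->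
  forall (a b c : 'I_m.+2) (j : nat),
  a != 0 -> a *+ 2 != 0 -> b != 0 -> a - b != 0 -> a + b != 0 -> a + (a - b) != 0 ->
  c + a *+ j != 0 -> c + a *+ j.+1 != 0 -> c + a *+ j.+2 != 0 ->
  c + b + a *+ j != 0 -> c + b + a *+ j.+1 != 0 ->
  c + (a - b) + a *+ j != 0 -> c + (a - b) + a *+ j.+1 != 0 ->
  forall u Y v w, u \in Lg (c + a *+ j) -> Y \in Lg a -> v \in Lg b -> w \in Lg (a - b) ->
  br (br u Y) (br v w) = 0.
Proof.
move=> sm a b c j *.
apply: (sm (c + a *+ j) a b (a - b)) => //.
by apply: indep4; zs.
Qed.

Lemma hardL' (K : fieldType) (L : lmodType K) (br : L -> L -> L) m (Lg : 'I_m.+2 -> {pred L}) :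
  lie_bracket br -> graded br Lg -> (forall x, x \in Lg 0 -> x = 0) ->
  selective_metabelian br Lg ->
  forall (a c : 'I_m.+2), a != 0 -> a *+ 2 != 0 -> a *+ 3 != 0 -> a *+ 4 != 0 ->
  c + a *+ 0 != 0 -> c + a *+ 1 != 0 -> c + a *+ 2 != 0 -> c + a *+ 3 != 0 ->
  c + a *+ 4 != 0 -> c + a *+ 5 != 0 -> c + a *+ 6 != 0 ->
  forall u v1 w1 v2 w2, u \in Lg (c + a *+ 2) -> v1 \in Lg (- a) -> v2 \in Lg (- a) ->
  w1 \in Lg (a *+ 2) -> w2 \in Lg (a *+ 2) ->
  br (br u (br v1 w1)) (br v2 w2) = 0.
Proof.
move=> hl hg h0 sm a c a1 a2 a3 a4 *.
by apply: (hardL hl hg h0 sm (D := c + a *+ 2) a1 a2 a3 a4) => //; zs.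
Qed.


Lemma keyL (K : fieldType) (L : lmodType K) (br : L -> L -> L) m (Lg : 'I_m.+2 -> {pred L}) :
  lie_bracket br -> graded br Lg -> (forall x, x \in Lg 0 -> x = 0) ->
  selective_metabelian br Lg ->
  forall (a b c : 'I_m.+2), a != 0 -> a *+ 2 != 0 -> a *+ 3 != 0 -> a *+ 4 != 0 ->
  forall x (ys : seq L), x \in Lg c -> size ys = 7%N ->
  (forall y, y \in ys -> exists v w, [/\ v \in Lg b, w \in Lg (a - b) & y = br v w]) ->
  foldl br x ys = 0.
Proof.
move=> hl hg h0 sm a b c a1 a2 a3 a4 x ys hx.
case: ys => [|y1 [|y2 [|y3 [|y4 [|y5 [|y6 [|y7 [|y8 ys]]]]]]]] //= _ hy.
have [v1 [w1 [hv1 hw1 e1]]] := hy y1 ltac:(by rewrite !inE eqxx ?orbT).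
have [v2 [w2 [hv2 hw2 e2]]] := hy y2 ltac:(by rewrite !inE eqxx ?orbT).
have [v3 [w3 [hv3 hw3 e3]]] := hy y3 ltac:(by rewrite !inE eqxx ?orbT).
have [v4 [w4 [hv4 hw4 e4]]] := hy y4 ltac:(by rewrite !inE eqxx ?orbT).
have [v5 [w5 [hv5 hw5 e5]]] := hy y5 ltac:(by rewrite !inE eqxx ?orbT).
have [v6 [w6 [hv6 hw6 e6]]] := hy y6 ltac:(by rewrite !inE eqxx ?orbT).
have [v7 [w7 [hv7 hw7 e7]]] := hy y7 ltac:(by rewrite !inE eqxx ?orbT).
subst y1 y2 y3 y4 y5 y6 y7.
have hY : forall v w, v \in Lg b -> w \in Lg (a - b) -> br v w \in Lg a.
  by move=> v w hv hw; have := mem_br hg hv hw; rewrite addrC subrK.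
have memY : forall k u Y, u \in Lg (c + a *+ k) -> Y \in Lg a -> br u Y \in Lg (c + a *+ k.+1).
  by move=> k u Y hu hY'; have := mem_br hg hu hY'; rewrite mulrSr addrA.
pose U0 := x.
pose U1 := br U0 (br v1 w1).
pose U2 := br U1 (br v2 w2).
pose U3 := br U2 (br v3 w3).
pose U4 := br U3 (br v4 w4).
pose U5 := br U4 (br v5 w5).
pose U6 := br U5 (br v6 w6).
pose U7 := br U6 (br v7 w7).
change (U7 = 0).
have hU0 : U0 \in Lg (c + a *+ 0) by rewrite mulr0n addr0.
have hU1 : U1 \in Lg (c + a *+ 1) := memY 0%N _ _ hU0 (hY _ _ hv1 hw1).
have hU2 : U2 \in Lg (c + a *+ 2) := memY 1%N _ _ hU1 (hY _ _ hv2 hw2).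
have hU3 : U3 \in Lg (c + a *+ 3) := memY 2%N _ _ hU2 (hY _ _ hv3 hw3).
have hU4 : U4 \in Lg (c + a *+ 4) := memY 3%N _ _ hU3 (hY _ _ hv4 hw4).
have hU5 : U5 \in Lg (c + a *+ 5) := memY 4%N _ _ hU4 (hY _ _ hv5 hw5).
have hU6 : U6 \in Lg (c + a *+ 6) := memY 5%N _ _ hU5 (hY _ _ hv6 hw6).
have hU7 : U7 \in Lg (c + a *+ 7) := memY 6%N _ _ hU6 (hY _ _ hv7 hw7).
have P0 : U0 = 0 -> U7 = 0 by move=> h; rewrite /U7 /U6 /U5 /U4 /U3 /U2 /U1 h !(br0l hl).
have P1 : U1 = 0 -> U7 = 0 by move=> h; rewrite /U7 /U6 /U5 /U4 /U3 /U2 h !(br0l hl).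
have P2 : U2 = 0 -> U7 = 0 by move=> h; rewrite /U7 /U6 /U5 /U4 /U3 h !(br0l hl).
have P3 : U3 = 0 -> U7 = 0 by move=> h; rewrite /U7 /U6 /U5 /U4 h !(br0l hl).
have P4 : U4 = 0 -> U7 = 0 by move=> h; rewrite /U7 /U6 /U5 h !(br0l hl).
have P5 : U5 = 0 -> U7 = 0 by move=> h; rewrite /U7 /U6 h !(br0l hl).
have P6 : U6 = 0 -> U7 = 0 by move=> h; rewrite /U7 h !(br0l hl).
have P7 : U7 = 0 -> U7 = 0 by [].
case: (boolP [exists k : 'I_8, c + a *+ k == 0]) => [/existsP [[k kl] /= /eqP hk] | /existsP nk].
  case: k kl hk => [|[|[|[|[|[|[|[|k]]]]]]]] // _ hk.
  - by apply: P0; apply: h0; move: hU0; rewrite hk.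
  - by apply: P1; apply: h0; move: hU1; rewrite hk.
  - by apply: P2; apply: h0; move: hU2; rewrite hk.
  - by apply: P3; apply: h0; move: hU3; rewrite hk.
  - by apply: P4; apply: h0; move: hU4; rewrite hk.
  - by apply: P5; apply: h0; move: hU5; rewrite hk.
  - by apply: P6; apply: h0; move: hU6; rewrite hk.
  - by apply: P7; apply: h0; move: hU7; rewrite hk.
have Z : forall k, (k < 8)%N -> c + a *+ k != 0.
  by move=> k hk; apply/negP => /eqP h; apply: nk; exists (Ordinal hk); rewrite /= h.
have Z0 := Z 0%N isT.
have Z1 := Z 1%N isT.
have Z2 := Z 2%N isT.
have Z3 := Z 3%N isT.
have Z4 := Z 4%N isT.
have Z5 := Z 5%N isT.
have Z6 := Z 6%N isT.
have Z7 := Z 7%N isT.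
case: (eqVneq b 0) => [eb|hb].
  by apply: P1; rewrite /U1; move: hv1; rewrite eb => /h0 ->; rewrite (br0l hl) (br0r hl).
case: (eqVneq (a - b) 0) => [eb|hb'].
  by apply: P1; rewrite /U1; move: hw1; rewrite eb => /h0 ->; rewrite (br0r hl) (br0r hl).
case: (eqVneq (a + b) 0) => [eab|hab].
  have eb : b = - a by apply/eqP; rewrite -addr_eq0 addrC eab.
  have ew : a - b = a *+ 2 by rewrite eb opprK mulr2n.
  apply: P4; rewrite /U4 /U3.
  apply: (hardL' hl hg h0 sm a1 a2 a3 a4 Z0 Z1 Z2 Z3 Z4 Z5 Z6) => //.
  - by move: hv3; rewrite eb.
  - by move: hv4; rewrite eb.
  - by move: hw3; rewrite ew.
  - by move: hw4; rewrite ew.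
case: (eqVneq (a + (a - b)) 0) => [eab|hab'].
  have eb : a - b = - a by apply/eqP; rewrite -addr_eq0 addrC eab.
  have ev : b = a *+ 2.
    have -> : b = a - (a - b) by ring.
    by rewrite eb opprK mulr2n.
  apply: P4; rewrite /U4 /U3 (br_anti hl v3 w3) (br_anti hl v4 w4) !(brNr hl) !(brNl hl) opprK.
  apply: (hardL' hl hg h0 sm a1 a2 a3 a4 Z0 Z1 Z2 Z3 Z4 Z5 Z6) => //.
  - by move: hw3; rewrite eb.
  - by move: hw4; rewrite eb.
  - by move: hv3; rewrite ev.
  - by move: hv4; rewrite ev.
have [j hj /and4P [p0 p1 q0 q1]] := puzzle (c + b) (c + (a - b)) a1 a2 a3 a4.
case: j hj p0 p1 q0 q1 => [|[|[|[|[|j]]]]] // _ p0 p1 q0 q1.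
- by apply: P2; apply: (genL sm a1 a2 hb hb' hab hab' Z0 Z1 Z2 p0 p1 q0 q1 hU0 (hY _ _ hv1 hw1) hv2 hw2).
- by apply: P3; apply: (genL sm a1 a2 hb hb' hab hab' Z1 Z2 Z3 p0 p1 q0 q1 hU1 (hY _ _ hv2 hw2) hv3 hw3).
- by apply: P4; apply: (genL sm a1 a2 hb hb' hab hab' Z2 Z3 Z4 p0 p1 q0 q1 hU2 (hY _ _ hv3 hw3) hv4 hw4).
- by apply: P5; apply: (genL sm a1 a2 hb hb' hab hab' Z3 Z4 Z5 p0 p1 q0 q1 hU3 (hY _ _ hv4 hw4) hv5 hw5).
- by apply: P6; apply: (genL sm a1 a2 hb hb' hab hab' Z4 Z5 Z6 p0 p1 q0 q1 hU4 (hY _ _ hv5 hw5) hv6 hw6).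
Qed.

Theorem lemma2 (K : fieldType) (L : lmodType K) (br : L -> L -> L)
  (m : nat) (Lg : 'I_m.+1 -> {pred L}) :
  odd m.+1 ->
  lie_bracket br ->
  graded br Lg ->
  (forall x, x \in Lg 0 -> x = 0) ->
  selective_metabelian br Lg ->
  forall a b c : 'I_m.+1, (3 < add_order a)%N ->
  forall (x : L) (v w : 'I_7 -> L),
    x \in Lg c ->
    (forall k, v k \in Lg b) ->
    (forall k, w k \in Lg (a - b)) ->
    lnprod br x [seq br (v k) (w k) | k <- enum 'I_7] = 0.
Proof.
move=> hodd hl hg h0 sm a b c ho x v w hx hv hw.
have [a1 a2 a3 a4] := ord_facts hodd ho.
case: m Lg hodd hg h0 sm a b c ho hx hv hw a1 a2 a3 a4 =>
  [|m] Lg hodd hg h0 sm a b c ho hx hv hw a1 a2 a3 a4.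
  by move: a1; rewrite (ord1 a) eqxx.
rewrite /lnprod; apply: (keyL hl hg h0 sm a1 a2 a3 a4 hx).
  by rewrite size_map size_enum_ord.
by move=> y /mapP [k _ ->]; exists (v k), (w k).
Qed.
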